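(* Let $G$ be a connected threshold graph with binary string $b=0^{s_1}1^{t_1}\cdots 0^{s_k}1^{t_k}$ (all $s_i,t_i\geq 1$). Let $m=2k$ if $s_1=1$ and $m=2k+1$ if $s_1\geq 2$. Then the anti-regular graph $A_m$ is an induced subgraph of $G$, and in either case $A_m$ is the largest anti-regular graph contained in $G$ as an induced subgraph.
   Context: Threshold graphs from binary strings: given $b=b_1b_2\cdots b_n\in\{0,1\}^n$ with $b_1=0$, let $G_1$ be a single vertex, and for $j=2,\ldots,n$ obtain $G_j$ from $G_{j-1}$ by adding a new vertex which is adjacent to all previous vertices if $b_j=1$ and isolated if $b_j=0$; $G(b)=G_n$ and $b$ is called the binary string of $G(b)$. The notation $0^{s}$ (resp. $1^t$) denotes $s$ consecutive zeros (resp. $t$ consecutive ones). The anti-regular graph $A_m$ is $G(b)$ with $b=0101\cdots01$ (length $m$) when $m$ is even and $b=00101\cdots01$ (length $m$) when $m$ is odd. *)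

(* Defs.v *)
From mathcomp Require Import all_boot.
Set Implicit Arguments. Unset Strict Implicit. Unset Printing Implicit Defensive.

(* Threshold graph G(b) of a binary string b (true = 1, false = 0) on the
   vertex set 'I_(size b): vertex j (0-indexed, j-th added vertex) is
   adjacent to all earlier vertices iff b_j = 1.  So for i <> j, i ~ j iff
   the bit of the later of the two vertices, b_(max i j), is 1. *)
Definition thr_adj (b : seq bool) : rel 'I_(size b) :=
  fun i j => (i != j) && nth false b (maxn i j).
Arguments thr_adj b : clear implicits.

(* Binary string of the anti-regular graph A_m:
   m even: 0101...01 ; m odd: 00101...01 (0-indexed bits). *)
Definition antireg_string (m : nat) : seq bool :=
  if odd m then mkseq (fun i => (0 < i) && ~~ odd i) m
  else mkseq (fun i => odd i) m.

Definition antireg_adj (m : nat) : rel 'I_(size (antireg_string m)) :=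
  thr_adj (antireg_string m).
Arguments antireg_adj m : clear implicits.

Definition induced_sub (V W : finType) (eH : rel V) (eG : rel W) : Prop :=
  exists f : V -> W, injective f /\ forall x y, eH x y = eG (f x) (f y).

Definition block_string (s t : seq nat) : seq bool :=
  flatten [seq nseq p.1 false ++ nseq p.2 true | p <- zip s t].

(* Main.v *)
Require Import Defs.
From mathcomp Require Import all_boot.
From mathcomp Require Import zify.
Set Implicit Arguments. Unset Strict Implicit. Unset Printing Implicit Defensive.

Fixpoint T (l : seq bool) : nat :=
  match l with
  | x :: ((y :: _) as r) => (x != y) + T r
  | _ => 0
  end.

Lemma T_cons x l : T (x :: l) = (if l is y :: _ then (x != y) + T l else 0).
Proof. by case: l. Qed.

Lemma T_catl a c : T a <= T (a ++ c).
Proof.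
elim: a => [|x a IH] //.
rewrite cat_cons T_cons [T (x :: _)]T_cons.
case: a IH => [|y a] IH //.
by rewrite cat_cons leq_add2l.
Qed.

Lemma T_rcons a x :
  T (rcons a x) = T a + (if a is y :: a' then last y a' != x else false).
Proof.
elim: a => [|y a IH] //.
rewrite rcons_cons T_cons [T (y :: a)]T_cons.
case: a IH => [|z a] IH; first by rewrite /= addn0.
by rewrite rcons_cons IH addnA.
Qed.

Lemma T_nseq_cat n x c :
  T (nseq n x ++ c) = T c + (if n is _.+1 then (if c is y :: _ then x != y else false) else false).
Proof.
elim: n => [|n IH]; first by rewrite /= addn0.
rewrite [nseq _ _]/= cat_cons T_cons.
case: n IH => [|n] IH /=.
  by case: (c) => [|y c'] //=; rewrite addnC.
by rewrite -IH eqxx.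
Qed.

Definition clb (b : seq bool) v := T (take v (behead b)).

Lemma clbS b v : clb b v.+1 =
  clb b v + [&& 0 < v, v.+1 < size b & nth false b v.+1 != nth false b v].
Proof.
rewrite /clb.
case: (ltnP v (size (behead b))) => H.
  rewrite (take_nth false H) T_rcons nth_behead.
  have Hs : v.+1 < size b by move: H; rewrite size_behead; case: (size b).
  rewrite Hs.
  case: v H Hs => [|v] H Hs; first by rewrite take0.
  have Hn : size (take v.+1 (behead b)) = v.+1 by rewrite size_take H.
  case E: (take v.+1 (behead b)) Hn => [|y a] //= Hn.
  have := nth_last false (y :: a); rewrite /= => <-.
  rewrite -E /= -Hn /= nth_take // nth_behead.
  by rewrite eq_sym.
rewrite !take_oversize //; last by apply: leqW.
have -> : v.+1 < size b = false by move: H; rewrite size_behead; case: (size b) => //= n; lia.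
by rewrite andbF addn0.
Qed.

Lemma clb_mono b v w : v <= w -> clb b v <= clb b w.
Proof.
apply: (@homo_leq _ (clb b) leq) => //; first exact: leq_trans.
by move=> i; rewrite clbS leq_addr.
Qed.

Lemma clb_max b v : clb b v <= T (behead b).
Proof.
apply: (leq_trans (clb_mono b (leq_maxl v (size b)))).
rewrite /clb take_oversize //.
rewrite size_behead; apply: leq_trans (leq_maxr _ _); exact: leq_pred.
Qed.

Lemma clb_const b a q w : clb b a = clb b q -> a <= w < q ->
  [&& 0 < w, w.+1 < size b & nth false b w.+1 != nth false b w] = false.
Proof.
move=> E /andP[aw wq].
have h1 := clb_mono b aw.
have h2 := clb_mono b wq.
rewrite clbS -E in h2.
apply/negbTE/negP => Hc; rewrite Hc in h2; lia.
Qed.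

Definition twins (V : finType) (e : rel V) (x y : V) :=
  forall w, w != x -> w != y -> e x w = e y w.

Lemma twins_sym (V : finType) (e : rel V) x y : twins e x y -> twins e y x.
Proof. by move=> H w wy wx; rewrite H. Qed.

Lemma twins_transfer (V W : finType) (eH : rel V) (eG : rel W) (f : V -> W) x y :
  injective f -> (forall x y, eH x y = eG (f x) (f y)) ->
  twins eG (f x) (f y) -> twins eH x y.
Proof.
move=> finj fp H w wx wy; rewrite !fp; apply: H; by rewrite (inj_eq finj).
Qed.

Lemma down (P : nat -> bool) a q :
  (forall w, a <= w < q -> P w.+1 = P w) -> forall w, a <= w <= q -> P w = P q.
Proof.
move=> H w /andP[aw wq].
suff K : forall d, w + d <= q -> P w = P (w + d).
  by rewrite (K (q - w)) ?subnKC // addnC subnK.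
elim=> [|d IH] hd; first by rewrite addn0.
rewrite IH; last by lia.
rewrite addnS H //; lia.
Qed.

Lemma thr_twins (b : seq bool) (p q : 'I_(size b)) : p < q ->
  (forall w, maxn p 1 <= w <= q -> nth false b w = nth false b q) ->
  twins (thr_adj b) p q.
Proof.
move=> pq H w wp wq; rewrite /thr_adj.
rewrite ![_ == w]eq_sym wp wq /=.
case: (ltngtP w p) => hwp.
- rewrite (maxn_idPl (ltnW (ltn_trans hwp pq))).
  apply: H; apply/andP; split; [lia | exact: ltnW].
- case: (ltngtP w q) => hwq.
  + apply: H; apply/andP; split; [lia | exact: ltnW].
  + by [].
  + by move: wq; rewrite (val_inj hwq) eqxx.
- by move: wp; rewrite (val_inj hwp) eqxx.
Qed.

Lemma antireg_twins (c : seq bool) (x y : 'I_(size c)) :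
  (forall w, 0 < w -> w.+1 < size c -> nth false c w != nth false c w.+1) ->
  x < y -> twins (thr_adj c) x y -> nat_of_ord y = 1.
Proof.
move=> alt xy tw.
case: (eqVneq (nat_of_ord y) 1) => // y1.
have {}y1 : 1 < y by move/eqP in y1; lia.
have yc := ltn_ord y.
case: (ltnP x.+1 y) => h.
- have wl : y.-1 < size c by lia.
  have := tw (Ordinal wl).
  rewrite /thr_adj -!val_eqE /=.
  have -> : (y.-1 == nat_of_ord x) = false by apply/eqP; lia.
  have -> : (y.-1 == nat_of_ord y) = false by apply/eqP; lia.
  move=> /(_ isT isT).
  rewrite (maxn_idPr (_ : x <= y.-1)); last by lia.
  rewrite (maxn_idPl (_ : y.-1 <= y)); last by lia.
  have -> : (nat_of_ord x != y.-1) by apply/eqP; lia.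
  have -> : (nat_of_ord y != y.-1) by apply/eqP; lia.
  have H : nth false c y.-1 != nth false c y.
    have := alt y.-1; rewrite prednK; [apply; lia | lia].
  by rewrite /= => E; rewrite E eqxx in H.
- have hy : nat_of_ord y = x.+1 by lia.
  have wl : 0 < size c by lia.
  have := tw (Ordinal wl).
  rewrite /thr_adj -!val_eqE /=.
  have -> : (0 == nat_of_ord x) = false by apply/eqP; lia.
  have -> : (0 == nat_of_ord y) = false by apply/eqP; lia.
  move=> /(_ isT isT).
  rewrite !maxn0.
  have -> : (nat_of_ord x != 0) by apply/eqP; lia.
  have -> : (nat_of_ord y != 0) by apply/eqP; lia.
  rewrite hy /= => E.
  have H : nth false c x != nth false c x.+1 by apply: alt; [lia | rewrite -hy].
  by rewrite E eqxx in H.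
Qed.

Lemma bound (b c : seq bool) :
  (forall w, 0 < w -> w.+1 < size c -> nth false c w != nth false c w.+1) ->
  induced_sub (thr_adj c) (thr_adj b) -> size c <= (T (behead b)).+2.
Proof.
move=> alt [f [finj fp]].
set C := T (behead b).
have key : forall x y : 'I_(size c), 0 < x -> 0 < y -> f x < f y ->
    clb b (maxn (f x) 1) = clb b (maxn (f y) 1) -> False.
  move=> x y x0 y0 fxy E.
  have fy1 : maxn (f y) 1 = f y by apply/maxn_idPl; lia.
  rewrite fy1 in E.
  have hc : forall w, maxn (f x) 1 <= w < f y ->
      nth false b w.+1 = nth false b w.
    move=> w hw; have := clb_const E hw.
    have hfy := ltn_ord (f y).
    have -> : 0 < w by lia.
    have -> : w.+1 < size b by lia.
    by move/negbFE/eqP.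
  have hd := down hc.
  have tw : twins (thr_adj b) (f x) (f y) by apply: thr_twins.
  have twA := twins_transfer finj fp tw.
  case: (ltngtP x y) => hxy.
  - have := antireg_twins alt hxy twA; lia.
  - have := antireg_twins alt hxy (twins_sym twA); lia.
  - by move: fxy; rewrite (val_inj hxy) ltnn.
pose g (x : 'I_(size c)) : 'I_C.+2 :=
  if nat_of_ord x == 0 then ord0 else inord (clb b (maxn (f x) 1)).+1.
have ginj : injective g.
  move=> x y; rewrite /g.
  have bx := clb_max b (maxn (f x) 1).
  have by_ := clb_max b (maxn (f y) 1).
  case: eqP => hx; case: eqP => hy.
  - by move=> _; apply: val_inj; rewrite /= hx hy.
  - move/(congr1 val); rewrite /= inordK //; lia.
  - move/(congr1 val); rewrite /= inordK //; lia.
  - move/(congr1 val); rewrite /= !inordK ?ltnS // => -[E].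
    case: (ltngtP (f x) (f y)) => hf.
    + by case: (key x y _ _ hf E); lia.
    + by case: (key y x _ _ hf (esym E)); lia.
    + exact: finj (val_inj hf).
have := leq_card g ginj.
by rewrite !card_ord.
Qed.

Lemma embed (b c : seq bool) (u : nat -> nat) :
  (forall x y, x < y < size c -> u x < u y) ->
  (forall x, x < size c -> u x < size b) ->
  (forall x, 0 < x < size c -> nth false b (u x) = nth false c x) ->
  induced_sub (thr_adj c) (thr_adj b).
Proof.
move=> mono ub bits.
exists (fun x : 'I_(size c) => Ordinal (ub x (ltn_ord x))); split.
  move=> x y /(congr1 val) /= E; apply: val_inj => /=.
  case: (ltngtP x y) => // h.
  - have := mono x y; rewrite h ltn_ord E ltnn; by move/(_ isT).
  - have := mono y x; rewrite h ltn_ord E ltnn; by move/(_ isT).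
move=> x y; rewrite /thr_adj -!val_eqE /=.
case: (ltngtP x y) => h.
- have hu := mono x y; rewrite h ltn_ord in hu.
  have hu' := hu isT.
  rewrite (maxn_idPr (ltnW hu')) (_ : (u x == u y) = false); last by apply/eqP; lia.
  rewrite bits //; apply/andP; split; [lia | exact: ltn_ord].
- have hu := mono y x; rewrite h ltn_ord in hu.
  have hu' := hu isT.
  rewrite (maxn_idPl (ltnW hu')) (_ : (u x == u y) = false); last by apply/eqP; lia.
  rewrite bits //; apply/andP; split; [lia | exact: ltn_ord].
- by rewrite h !eqxx.
Qed.

Lemma bs_cons a s b t :
  block_string (a :: s) (b :: t) = nseq a false ++ nseq b true ++ block_string s t.
Proof. by rewrite /block_string /= -catA. Qed.

Fixpoint bpos (s t : seq nat) (i : nat) : nat :=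
  match i, s, t with
  | i'.+1, a :: s', b :: t' => a + b + bpos s' t' i'
  | _, _, _ => 0
  end.

Lemma bpos0 s t : bpos s t 0 = 0.
Proof. by case: s => [|? ?]; case: t. Qed.

Lemma bposS s t i : i < size s -> size s = size t ->
  bpos s t i.+1 = bpos s t i + nth 0 s i + nth 0 t i.
Proof.
elim: s t i => [|a s IH] [|b t] [|i] //= hi [e].
  by rewrite bpos0 addn0.
rewrite IH //; lia.
Qed.

Lemma nth_bs s t i j : size s = size t -> i < size s ->
  j < nth 0 s i + nth 0 t i ->
  nth false (block_string s t) (bpos s t i + j) = (nth 0 s i <= j).
Proof.
elim: s t i => [|a s IH] [|b t] [|i] //= [e] hi hj; rewrite bs_cons.
  rewrite ?bpos0 add0n nth_cat size_nseq.
  case: ltnP => h; first by rewrite nth_nseq h.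
  by rewrite nth_cat size_nseq ltn_subLR // hj nth_nseq; case: ltnP => //; lia.
rewrite catA nth_cat size_cat !size_nseq.
have -> : (a + b + bpos s t i + j < a + b) = false by lia.
rewrite -[a + b + _ + j]addnA addKn.
exact: IH.
Qed.

Lemma bpos_size s t i : size s = size t -> i < size s ->
  bpos s t i + nth 0 s i + nth 0 t i <= size (block_string s t).
Proof.
elim: s t i => [|a s IH] [|b t] [|i] //= [e] hi; rewrite bs_cons !size_cat !size_nseq.
  by rewrite ?bpos0 add0n addnA leq_addr.
have := IH t i e hi; lia.
Qed.

Lemma T_bs s t : size s = size t -> all (fun x => 0 < x) s -> all (fun x => 0 < x) t ->
  0 < size s ->
  T (block_string s t) = (size s).*2.-1 /\
  exists l, block_string s t = false :: l.
Proof.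
elim: s t => [|a s IH] [|b t] //= [e] /andP[a0 sp] /andP[b0 tp] _.
rewrite bs_cons.
split; last by case: a a0 => // a _; eexists.
rewrite T_nseq_cat T_nseq_cat.
case: a a0 => // a _; case: b b0 => // b _ /=.
case: s IH e sp => [|a' s] IH e sp.
  by case: t e tp.
case: t e tp => [|b' t] // e tp.
have [-> [l ->]] := IH (b' :: t) e sp tp isT.
rewrite /= !doubleS /=; lia.
Qed.

Lemma nth_true_lt (l : seq bool) p : nth false l p -> p < size l.
Proof. by apply: contraLR; rewrite -leqNgt => h; rewrite nth_default. Qed.

Lemma mono_step (u : nat -> nat) n :
  (forall x, x.+1 < n -> u x < u x.+1) -> forall x y, x < y < n -> u x < u y.
Proof.
move=> H x; elim=> [|y IH] // /andP[hxy hy].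
rewrite ltnS leq_eqVlt in hxy; case/orP: hxy => [/eqP ->|hxy].
  by apply: H.
apply: ltn_trans (IH _) (H _ hy); rewrite hxy /=; lia.
Qed.

Lemma size_antireg m : size (antireg_string m) = m.
Proof. by rewrite /antireg_string; case: odd; rewrite size_mkseq. Qed.

Lemma antireg_alt m w : 0 < w -> w.+1 < size (antireg_string m) ->
  nth false (antireg_string m) w != nth false (antireg_string m) w.+1.
Proof.
rewrite size_antireg /antireg_string => w0 wm.
case: odd; rewrite !nth_mkseq ?(ltnW wm) //=.
  by rewrite w0 /=; case: odd.
by case: odd.
Qed.

Unset Implicit Arguments.
Theorem theorem3p2 (k : nat) (s t : seq nat) :
  0 < k -> size s = k -> size t = k ->
  all (fun x => 0 < x) s -> all (fun x => 0 < x) t ->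
  (forall x y : 'I_(size (block_string s t)),
      connect (thr_adj (block_string s t)) x y) ->
  let m := if nth 0 s 0 == 1 then k.*2 else k.*2.+1 in
  induced_sub (antireg_adj m) (thr_adj (block_string s t)) /\
  (forall m', induced_sub (antireg_adj m') (thr_adj (block_string s t)) ->
      m' <= m).
Proof.
move=> k0 sk tk spos tpos _ m.
have sP : forall i, i < k -> 0 < nth 0 s i.
  by move=> i hi; apply: (all_nthP 0 spos); rewrite sk.
have tP : forall i, i < k -> 0 < nth 0 t i.
  by move=> i hi; apply: (all_nthP 0 tpos); rewrite tk.
have est : size s = size t by rewrite sk tk.
have nb : forall i j, i < k -> j < nth 0 s i + nth 0 t i ->
    nth false (block_string s t) (bpos s t i + j) = (nth 0 s i <= j).
  by move=> i j hi hj; apply: nth_bs => //; rewrite sk.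
have bsz : forall i, i < k -> bpos s t i + nth 0 s i + nth 0 t i <= size (block_string s t).
  by move=> i hi; apply: bpos_size => //; rewrite sk.
have bS : forall i, i < k -> bpos s t i.+1 = bpos s t i + nth 0 s i + nth 0 t i.
  by move=> i hi; apply: bposS => //; rewrite sk.
split.
- rewrite /antireg_adj /m; case: ifP => s01.
  + pose u x := bpos s t x./2 + (if odd x then nth 0 s x./2 else 0).
    apply: (@embed _ _ u); rewrite size_antireg.
    * apply: mono_step => x hx.
      have h2 := odd_double_half x; rewrite -muln2 in h2; rewrite -muln2 in hx.
      rewrite /u /= uphalf_half.
      case ox: (odd x) h2 => /= h2.
      - rewrite add1n bS; last by lia.
        have := tP x./2; lia.
      - rewrite add0n; have := sP x./2; lia.
    * move=> x hx.
      have h2 := odd_double_half x; rewrite -muln2 in h2; rewrite -muln2 in hx.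
      have := bsz x./2; have := tP x./2; rewrite /u; case: odd h2 => /= h2; lia.
    * move=> x /andP[x0 hx].
      have h2 := odd_double_half x; rewrite -muln2 in h2.
      rewrite /antireg_string odd_double nth_mkseq // /u nb.
      - have := sP x./2; case: odd h2 => /= h2; lia.
      - rewrite -muln2 in hx; lia.
      - have := sP x./2; have := tP x./2; rewrite -muln2 in hx; case: odd h2 => /= h2; lia.
  + have hs : forall i, i < k -> (i == 0 : nat) < nth 0 s i.
      move=> i hi; have := sP i hi; case: eqP => [->|] //=.
      by move: s01; case: (nth 0 s 0) => [|[|n]].
    pose u x := if x is y.+1 then
       bpos s t y./2 + (if odd y then nth 0 s y./2 else (y./2 == 0 : nat)) else 0.
    apply: (@embed _ _ u); rewrite size_antireg.
    * apply: mono_step => -[|y] hx.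
        by rewrite /u /= bpos0.
      have h2 := odd_double_half y; rewrite -muln2 in h2; rewrite -muln2 in hx.
      rewrite /u /= uphalf_half.
      case ox: (odd y) h2 => /= h2.
      - rewrite add1n bS; last by lia.
        have := tP y./2; lia.
      - rewrite add0n; have := hs y./2; lia.
    * move=> [|y] hx.
        by rewrite /u; have := bsz 0 k0; have := sP 0 k0; lia.
      have h2 := odd_double_half y; rewrite -muln2 in h2; rewrite -muln2 in hx.
      have := bsz y./2; have := tP y./2; have := hs y./2.
      rewrite /u; case: odd h2 => /= h2; lia.
    * move=> [|y] /andP[x0 hx] //.
      have h2 := odd_double_half y; rewrite -muln2 in h2.
      rewrite /antireg_string.
      have -> : odd k.*2.+1 = true by rewrite /= odd_double.
      rewrite nth_mkseq // /u nb /=.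
      - rewrite negbK; have := hs y./2; case: odd h2 => /= h2; lia.
      - rewrite -muln2 in hx; lia.
      - have := hs y./2; have := tP y./2; rewrite -muln2 in hx; case: odd h2 => /= h2; lia.
- move=> m' H.
  have := bound (@antireg_alt m') H; rewrite size_antireg.
  have hs0 : 0 < size s by rewrite sk.
  have [Tb [l bl]] := T_bs est spos tpos hs0.
  have hl1 : nth false (block_string s t) 1 = (nth 0 s 0 == 1).
    have := nb 0 1 k0; rewrite bpos0 add0n => ->.
      by have := sP 0 k0; case: (nth 0 s 0) => [|[|n]].
    by have := sP 0 k0; have := tP 0 k0; lia.
  rewrite bl /= in hl1 *; rewrite bl T_cons in Tb.
  rewrite -muln2 in Tb.
  case: l Tb hl1 {bl} => [|y l] Tb hl1; first by lia.
  rewrite /m -hl1 -!muln2; case: y {hl1} Tb => /= Tb; lia.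
Qed.
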